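(* Let $n\in\mathbb{N}$, let $X$ be a non-empty perfect Polish space, let $\pi$ be a balanced scheme of size $n$, and let $\mathcal{V}\subseteq\mathcal{U}(\pi)$ be a non-empty open subset of $\mathcal{K}(X)$. Then there exists a balanced scheme $\pi'$ of size $n+1$ which is consistent with $\pi$ and satisfies $\mathcal{U}(\pi')\subseteq\mathcal{V}$.
   Context: $\mathcal{K}(X)$ is the space of non-empty compact subsets of $X$ with the Hausdorff metric. Fix an onto map $\Psi$ from the positive odd integers to the set $\mathbb{N}^{<\omega}$ of finite sequences of natural numbers such that $\Psi(m)$ has at most $m$ coordinates for every odd $m$. Given positive integers $a_1,a_2,\dots$, let $\mathcal{I}_m=\prod_{k=1}^m\{1,\dots,a_k\}$. For $n\ge1$ and $(a_1,\dots,a_{2n-1})$ define $\Phi=\Phi_{a_1\dots a_{2n-1}}$ on $\{2k-1:1\le k\le n\}$ by $\Phi(2k-1)=\Psi(2k-1)$ if $\Psi(2k-1)\in\bigcup_{m=1}^{2k-1}\mathcal{I}_m$, and $\Phi(2k-1)=(1)\in\mathcal{I}_1$ otherwise. For $n\ge1$, a balanced scheme of size $n$ is a pair consisting of positive integers $(a_1,\dots,a_{2n})$ and non-empty open sets $U_{i_1\dots i_k}\subseteq X$ for $(i_1,\dots,i_k)\in\mathcal{I}_k$, $1\le k\le 2n$, such that there are positive reals $b_k$ with: (1) $a_1\ge2$ and $a_k\ge(k-1)a_1\cdots a_{k-1}$ for $2\le k\le 2n$; (2) $\overline{U_{i_1\dots i_k}}\subseteq U_{i_1\dots i_{k-1}}$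 for $2\le k\le 2n$; (3) $\operatorname{diam}U_{i_1\dots i_k}\le b_k$ for $1\le k\le 2n$; (4) $\operatorname{dist}(U_{i_1\dots i_k},U_{j_1\dots j_k})>2b_k$ whenever $(i_1,\dots,i_k)\ne(j_1,\dots,j_k)\in\mathcal{I}_k$, $1\le k\le 2n$; (5) with $\Phi=\Phi_{a_1\dots a_{2n-1}}$: if $k<2n$ is odd, $U_{i_1\dots i_k}\subseteq U_{\Phi(k)}$ and $U_{j_1\dots j_k}\not\subseteq U_{\Phi(k)}$, then for all $s\ne t$ in $\{1,\dots,a_{k+1}\}$, $\operatorname{dist}(U_{i_1\dots i_k s},U_{i_1\dots i_k t})>\operatorname{diam}\bigl(\bigcup_{j_{k+1}=1}^{a_{k+1}}U_{j_1\dots j_k j_{k+1}}\bigr)$. The balanced scheme of size $0$ is $(\emptyset,\emptyset)$. For a balanced scheme $\pi$ of size $n\ge1$, $\mathcal{U}(\pi)=\{K\in\mathcal{K}(X): K\subseteq\bigcup_{(i_1,\dots,i_{2n})\in\mathcal{I}_{2n}}U_{i_1\dots i_{2n}}$ and $K\cap U_{i_1\dots i_{2n}}\ne\emptyset$ for all $(i_1,\dots,i_{2n})\in\mathcal{I}_{2n}\}$; for size $0$, $\mathcal{U}(\pi)=\mathcal{K}(X)$. A balanced scheme $\pi'$ of size $n+1$ is consistent with a balanced scheme $\pi$ of size $n$ if $a_k(\pi')=a_k(\pi)$ and $U_{i_1\dots i_k}(\pi')=U_{i_1\dots i_k}(\pi)$ for all $k\le 2n$ and $(i_1,\dots,i_k)\in\mathcal{I}_k$.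 *)

(* Defs.v *)
From Stdlib Require Import Reals List Arith Bool.
Import ListNotations.
Open Scope R_scope.
Local Open Scope bool_scope.

Section Metric.
Variable X : Type.
Variable d : X -> X -> R.

Definition is_metric : Prop :=
  (forall x y, 0 <= d x y) /\ (forall x y, d x y = 0 <-> x = y) /\
  (forall x y, d x y = d y x) /\ (forall x y z, d x z <= d x y + d y z).

Definition open (A : X -> Prop) : Prop :=
  forall x, A x -> exists eps, 0 < eps /\ forall y, d x y < eps -> A y.

Definition closure (A : X -> Prop) (x : X) : Prop :=
  forall eps, 0 < eps -> exists y, A y /\ d x y < eps.

Definition subset (A B : X -> Prop) : Prop := forall x, A x -> B x.

Definition diam_le (A : X -> Prop) (r : R) : Prop :=
  forall x y, A x -> A y -> d x y <= r.

(* dist(A,B) = inf { d x y | x in A, y in B } > r *)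
Definition dist_gt (A B : X -> Prop) (r : R) : Prop :=
  exists c, r < c /\ forall x y, A x -> B y -> c <= d x y.

Definition cauchy (u : nat -> X) : Prop :=
  forall eps, 0 < eps -> exists N, forall p q, (N <= p)%nat -> (N <= q)%nat -> d (u p) (u q) < eps.

Definition complete : Prop :=
  forall u, cauchy u -> exists l, forall eps, 0 < eps -> exists N, forall p, (N <= p)%nat -> d (u p) l < eps.

Definition separable : Prop :=
  exists D : nat -> X, forall x eps, 0 < eps -> exists k, d x (D k) < eps.

Definition perfect : Prop :=
  forall x eps, 0 < eps -> exists y, y <> x /\ d x y < eps.

Definition compact (K : X -> Prop) : Prop :=
  forall (I : Type) (F : I -> X -> Prop), (forall i, open (F i)) ->
    (forall x, K x -> exists i, F i x) ->
    exists l : list I, forall x, K x -> exists i, In i l /\ F i x.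

Definition isK (K : X -> Prop) : Prop := (exists x, K x) /\ compact K.

(* Hausdorff distance d_H(K,L) < eps (for compact K, L the infima are attained) *)
Definition hball (K : X -> Prop) (eps : R) (L : X -> Prop) : Prop :=
  exists r, r < eps /\
    (forall x, K x -> exists y, L y /\ d x y <= r) /\
    (forall y, L y -> exists x, K x /\ d x y <= r).

Definition Kopen (V : (X -> Prop) -> Prop) : Prop :=
  forall K, V K -> isK K /\
    exists eps, 0 < eps /\ forall L, isK L -> hball K eps L -> V L.
End Metric.

(* ---- index sets I_m = prod_{j=1}^m {1,...,a_j}, indices are lists ---- *)
Definition inI (a : nat -> nat) (k : nat) (s : list nat) : Prop :=
  length s = k /\ forall j, (j < k)%nat -> (1 <= nth j s 0 <= a (S j))%nat.

Fixpoint inIb_from (a : nat -> nat) (j : nat) (s : list nat) : bool :=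
  match s with
  | [] => true
  | x :: s' => (1 <=? x) && (x <=? a j) && inIb_from a (S j) s'
  end.

Fixpoint prodA (a : nat -> nat) (m : nat) : nat :=
  match m with 0 => 1 | S m' => prodA a m' * a m end.

(* Phi_{a_1...a_{2n-1}}(k) for odd k: Psi(k) if Psi(k) lies in the union of
   I_1,...,I_k, and (1) otherwise *)
Definition Phi (Psi : nat -> list nat) (a : nat -> nat) (k : nat) : list nat :=
  let s := Psi k in
  if (1 <=? length s) && (length s <=? k) && inIb_from a 1 s then s else [1%nat].

(* balanced scheme of size n: (a_1..a_{2n}) given by a, open sets by U *)
Definition balanced (X : Type) (d : X -> X -> R) (Psi : nat -> list nat)
  (n : nat) (a : nat -> nat) (U : list nat -> X -> Prop) : Prop :=
  n = 0%nat \/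
  ((1 <= n)%nat /\
   (forall k, (1 <= k <= 2 * n)%nat -> (1 <= a k)%nat) /\
   (forall k s, (1 <= k <= 2 * n)%nat -> inI a k s ->
      open X d (U s) /\ exists x, U s x) /\
   exists b : nat -> R,
     (forall k, (1 <= k <= 2 * n)%nat -> 0 < b k) /\
     (2 <= a 1%nat)%nat /\
     (forall k, (2 <= k <= 2 * n)%nat -> ((k - 1) * prodA a (k - 1) <= a k)%nat) /\
     (forall k s, (2 <= k <= 2 * n)%nat -> inI a k s ->
        subset X (closure X d (U s)) (U (removelast s))) /\
     (forall k s, (1 <= k <= 2 * n)%nat -> inI a k s -> diam_le X d (U s) (b k)) /\
     (forall k s t, (1 <= k <= 2 * n)%nat -> inI a k s -> inI a k t -> s <> t ->
        dist_gt X d (U s) (U t) (2 * b k)) /\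
     (forall k i j, (k < 2 * n)%nat -> Nat.odd k = true -> inI a k i -> inI a k j ->
        subset X (U i) (U (Phi Psi a k)) -> ~ subset X (U j) (U (Phi Psi a k)) ->
        forall s t, (1 <= s <= a (S k))%nat -> (1 <= t <= a (S k))%nat -> s <> t ->
        exists r,
          diam_le X d (fun x => exists u, (1 <= u <= a (S k))%nat /\ U (j ++ [u]) x) r /\
          dist_gt X d (U (i ++ [s])) (U (i ++ [t])) r)).

Definition Upi (X : Type) (d : X -> X -> R) (n : nat) (a : nat -> nat)
  (U : list nat -> X -> Prop) (K : X -> Prop) : Prop :=
  isK X d K /\
  (n = 0%nat \/
   ((forall x, K x -> exists i, inI a (2 * n) i /\ U i x) /\
    (forall i, inI a (2 * n) i -> exists x, K x /\ U i x))).

Definition consistent (X : Type) (n : nat) (a : nat -> nat) (U : list nat -> X -> Prop)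
  (a' : nat -> nat) (U' : list nat -> X -> Prop) : Prop :=
  (forall k, (1 <= k <= 2 * n)%nat -> a' k = a k) /\
  (forall k s, (1 <= k <= 2 * n)%nat -> inI a k s -> forall x, U' s x <-> U s x).

(* Main.v *)
Require Import Defs.
From Stdlib Require Import Reals List Arith Lra Lia Classical ClassicalEpsilon.
Import ListNotations.
Open Scope R_scope.

Lemma choice_fun (A B : Type) (P : A -> B -> Prop) :
  (forall x, exists y, P x y) -> exists f : A -> B, forall x, P x (f x).
Proof.
  intros H. exists (fun x => proj1_sig (constructive_indefinite_description _ (H x))).
  intro x. exact (proj2_sig (constructive_indefinite_description _ (H x))).
Qed.

Definition dec (P : Prop) : bool := if excluded_middle_informative P then true else false.
Lemma dec_true (P : Prop) : dec P = true <-> P.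
Proof. unfold dec; destruct (excluded_middle_informative P); split; intuition; discriminate. Qed.

Definition down_closed {T} (P : T -> R -> Prop) :=
  forall x e e', 0 < e' -> e' <= e -> P x e -> P x e'.

Lemma finite_min_range (P : nat -> R -> Prop) : down_closed P ->
  forall N, (forall u, (1 <= u <= N)%nat -> exists e, 0 < e /\ P u e) ->
  exists e, 0 < e /\ forall u, (1 <= u <= N)%nat -> P u e.
Proof.
  intros Hd N. induction N as [|N IH]; intros H.
  - exists 1; split; [lra| intros; lia].
  - destruct IH as [e1 [He1 H1]]. { intros u Hu; apply H; lia. }
    destruct (H (S N)) as [e2 [He2 H2]]; [lia|].
    exists (Rmin e1 e2); split; [apply Rmin_pos; auto|].
    intros u Hu. destruct (Nat.eq_dec u (S N)) as [->|Hne].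
    + eapply Hd; [apply Rmin_pos; auto| apply Rmin_r| auto].
    + eapply Hd; [apply Rmin_pos; auto| apply Rmin_l| apply H1; lia].
Qed.

Definition inI0 := inI.

Lemma inI_snoc a k s u : inI a k s -> (1 <= u <= a (S k))%nat -> inI a (S k) (s ++ [u]).
Proof.
  intros [Hl Hs] Hu. split.
  - rewrite length_app; simpl; lia.
  - intros j Hj. destruct (Nat.lt_ge_cases j k).
    + rewrite app_nth1 by lia. apply Hs; lia.
    + assert (j = k) by lia; subst j. rewrite app_nth2 by lia. rewrite Hl, Nat.sub_diag. simpl. exact Hu.
Qed.

Lemma inI_decomp a k t : inI a (S k) t ->
  exists s u, t = s ++ [u] /\ inI a k s /\ (1 <= u <= a (S k))%nat.
Proof.
  intros [Hl Hs]. assert (Hne : t <> []) by (intro; subst; simpl in Hl; lia).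
  pose proof (app_removelast_last 0%nat Hne) as E.
  exists (removelast t), (last t 0%nat). split; [exact E|].
  assert (Hl2 : length (removelast t) = k).
  { rewrite E in Hl. rewrite length_app in Hl. simpl in Hl. lia. }
  split; [split; [exact Hl2|]|].
  - intros j Hj. specialize (Hs j ltac:(lia)). rewrite E in Hs. rewrite app_nth1 in Hs by lia. exact Hs.
  - specialize (Hs k ltac:(lia)). rewrite E in Hs. rewrite app_nth2 in Hs by lia.
    rewrite Hl2, Nat.sub_diag in Hs. exact Hs.
Qed.

Lemma inI_0 a s : inI a 0 s <-> s = [].
Proof.
  split.
  - intros [Hl _]. destruct s; [reflexivity| simpl in Hl; lia].
  - intros ->. split; [reflexivity| intros; lia].
Qed.

Lemma inI_ext a a' k s : (forall j, (1 <= j <= k)%nat -> a' j = a j) -> inI a k s -> inI a' k s.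
Proof.
  intros Ha [Hl Hs]. split; [auto|]. intros j Hj. rewrite Ha by lia. auto.
Qed.

Lemma finite_min_I (a : nat -> nat) (P : list nat -> R -> Prop) : down_closed P ->
  forall k, (forall s, inI a k s -> exists e, 0 < e /\ P s e) ->
  exists e, 0 < e /\ forall s, inI a k s -> P s e.
Proof.
  intros Hd k. revert P Hd. induction k as [|k IH]; intros P Hd H.
  - destruct (H [] (proj2 (inI_0 a []) eq_refl)) as [e [He Hp]].
    exists e; split; auto. intros s Hs. apply inI_0 in Hs; subst; auto.
  - destruct (IH (fun s e => forall u, (1 <= u <= a (S k))%nat -> P (s ++ [u]) e)) as [e [He Hp]].
    + intros s e e' He' Hle Hx u Hu. eapply Hd; eauto.
    + intros s Hs. apply (finite_min_range (fun u e => P (s ++ [u]) e)).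
      * intros u e e' ? ? ?; eapply Hd; eauto.
      * intros u Hu. apply H. apply inI_snoc; auto.
    + exists e; split; auto. intros t Ht. destruct (inI_decomp _ _ _ Ht) as [s [u [-> [Hs Hu]]]]. auto.
Qed.

Lemma prodA_ext a a' m : (forall j, (1 <= j <= m)%nat -> a' j = a j) -> prodA a' m = prodA a m.
Proof.
  induction m; intros H; simpl; auto. rewrite IHm by (intros; apply H; lia). rewrite H by lia. auto.
Qed.

Lemma inIb_ext a a' s j : (forall i, (j <= i < j + length s)%nat -> a' i = a i) ->
  inIb_from a' j s = inIb_from a j s.
Proof.
  revert j; induction s as [|x s IH]; intros j H; simpl; auto.
  rewrite H by (simpl; lia). rewrite IH; auto. intros i Hi; apply H; simpl; lia.
Qed.

Lemma Phi_ext Psi a a' k : (forall j, (1 <= j <= k)%nat -> a' j = a j) -> Phi Psi a' k = Phi Psi a k.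
Proof.
  intros H. unfold Phi. destruct (length (Psi k) <=? k)%nat eqn:E.
  - apply Nat.leb_le in E. rewrite inIb_ext with (a := a); auto. intros; apply H; lia.
  - rewrite !Bool.andb_false_r. simpl. auto.
Qed.

Lemma Phi_len Psi a k : (1 <= k)%nat -> (length (Phi Psi a k) <= k)%nat.
Proof.
  intros Hk. unfold Phi. destruct ((1 <=? length (Psi k)) && (length (Psi k) <=? k) && inIb_from a 1 (Psi k))%bool eqn:E.
  - apply andb_prop in E as [E _]. apply andb_prop in E as [_ E]. apply Nat.leb_le; auto.
  - simpl; lia.
Qed.

Section M.
Variable X : Type.
Variable d : X -> X -> R.
Variable Hm : is_metric X d.

Lemma dpos x y : 0 <= d x y. Proof. apply (proj1 Hm). Qed.
Lemma dsym x y : d x y = d y x. Proof. apply (proj1 (proj2 (proj2 Hm))). Qed.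
Lemma dtri x y z : d x z <= d x y + d y z. Proof. apply (proj2 (proj2 (proj2 Hm))). Qed.
Lemma dzero x : d x x = 0. Proof. apply (proj1 (proj2 Hm)); auto. Qed.
Lemma dneq x y : x <> y -> 0 < d x y.
Proof.
  intros H. destruct (Rle_lt_or_eq_dec 0 (d x y) (dpos x y)); auto.
  exfalso; apply H, (proj1 (proj2 Hm)); auto.
Qed.

Definition ball (c : X) (r : R) : X -> Prop := fun y => d c y < r.

Lemma ball_open c r : open X d (ball c r).
Proof.
  intros x Hx. exists (r - d c x). split; [unfold ball in *; lra|].
  intros y Hy. unfold ball in *. pose proof (dtri c x y). lra.
Qed.

Lemma ball_diam c r : diam_le X d (ball c r) (2 * r).
Proof.
  intros x y Hx Hy. unfold ball in *. pose proof (dtri x c y). rewrite (dsym x c) in H. lra.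
Qed.

Lemma closure_ball_le c r x : closure X d (ball c r) x -> d c x <= r.
Proof.
  intros H. destruct (Rle_or_lt (d c x) r); auto.
  destruct (H (d c x - r)) as [y [Hy Hxy]]; [lra|]. unfold ball in Hy.
  pose proof (dtri c y x). rewrite (dsym y x) in H1. lra.
Qed.

Lemma ball_sep c c' r r' : r' < d c c' - 2 * r -> dist_gt X d (ball c r) (ball c' r) r'.
Proof.
  intros H. exists (d c c' - 2 * r). split; auto.
  intros x y Hx Hy. unfold ball in *.
  pose proof (dtri c x c'). pose proof (dtri x y c'). rewrite (dsym y c') in H1. lra.
Qed.

Lemma dist_gt_mono A B A' B' r r' : subset X A A' -> subset X B B' -> dist_gt X d A' B' r -> r' <= r ->
  dist_gt X d A B r'.
Proof.
  intros HA HB [c [Hc H]] Hr. exists c; split; [lra|]. intros; apply H; auto.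
Qed.

Lemma fresh_aux (C : list X) p : exists eta, 0 < eta /\ forall y, y <> p -> d p y < eta -> ~ In y C.
Proof.
  induction C as [|c C IH].
  - exists 1; split; [lra| intros y _ _ []].
  - destruct IH as [eta [He H]]. destruct (classic (c = p)) as [->|Hcp].
    + exists eta; split; auto. intros y Hy Hd [->|Hin]; [apply Hy; auto| eapply H; eauto].
    + pose proof (dneq p c (fun e => Hcp (eq_sym e))).
      exists (Rmin eta (d p c)); split; [apply Rmin_pos; auto|].
      intros y Hy Hd [->|Hin].
      * pose proof (Rmin_r eta (d p y)). lra.
      * eapply H; eauto. pose proof (Rmin_l eta (d p c)). lra.
Qed.

Variable Hperf : perfect X d.

Lemma fresh (C : list X) p rho : 0 < rho -> exists y, d p y < rho /\ ~ In y C.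
Proof.
  intros Hr. destruct (fresh_aux C p) as [eta [He H]].
  destruct (Hperf p (Rmin eta rho)) as [y [Hy Hd]]; [apply Rmin_pos; auto|].
  exists y. split.
  - pose proof (Rmin_r eta rho); lra.
  - apply H; auto. pose proof (Rmin_l eta rho); lra.
Qed.

Lemma dfam (base : nat -> X) (rho : nat -> R) N : (forall u, (1 <= u <= N)%nat -> 0 < rho u) ->
  exists f : nat -> X, (forall u, (1 <= u <= N)%nat -> d (base u) (f u) < rho u) /\
    (forall u u', (1 <= u <= N)%nat -> (1 <= u' <= N)%nat -> u <> u' -> f u <> f u').
Proof.
  induction N as [|N IH]; intros Hr.
  - exists base. split; intros; lia.
  - destruct IH as [f [H1 H2]]. { intros; apply Hr; lia. }
    destruct (fresh (map f (seq 1 N)) (base (S N)) (rho (S N))) as [y [Hy Hn]]; [apply Hr; lia|].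
    exists (fun u => if Nat.eqb u (S N) then y else f u). split.
    + intros u Hu. destruct (Nat.eqb_spec u (S N)); [subst; auto| apply H1; lia].
    + intros u u' Hu Hu' Hne.
      destruct (Nat.eqb_spec u (S N)); destruct (Nat.eqb_spec u' (S N)); try lia.
      * intro E. apply Hn. rewrite E. apply in_map. apply in_seq. lia.
      * intro E. apply Hn. rewrite <- E. apply in_map. apply in_seq. lia.
      * apply H2; lia.
Qed.

Lemma sep_range (f : nat -> X) N :
  (forall u u', (1 <= u <= N)%nat -> (1 <= u' <= N)%nat -> u <> u' -> f u <> f u') ->
  exists s, 0 < s /\ forall u u', (1 <= u <= N)%nat -> (1 <= u' <= N)%nat -> u <> u' -> s < d (f u) (f u').
Proof.
  intros H.
  destruct (finite_min_range (fun u e => forall u', (1 <= u' <= N)%nat -> u <> u' -> e < d (f u) (f u'))) with (N := N)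
    as [e [He He2]].
  - intros x e e' ? ? Hx u' ? ?. specialize (Hx u' H2 H3). lra.
  - intros u Hu. apply (finite_min_range (fun u' e => u <> u' -> e < d (f u) (f u'))).
    + intros x e e' ? ? Hx ?. specialize (Hx H2). lra.
    + intros u' Hu'. destruct (Nat.eq_dec u u') as [->|Hne].
      * exists 1; split; [lra| intros; congruence].
      * pose proof (dneq _ _ (H u u' Hu Hu' Hne)). exists (d (f u) (f u') / 2). split; [lra| intros; lra].
  - exists e; split; auto.
Qed.
End M.

Lemma balanced_old X d Psi n a U : balanced X d Psi n a U ->
  exists b : nat -> R,
    0 < b (2 * n)%nat /\
    (forall k, (1 <= k <= 2 * n)%nat -> 0 < b k) /\
    (forall k, (1 <= k <= 2 * n)%nat -> (1 <= a k)%nat) /\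
    (forall k s, (1 <= k <= 2 * n)%nat -> inI a k s -> open X d (U s) /\ exists x, U s x) /\
    ((1 <= n)%nat -> (2 <= a 1%nat)%nat) /\
    (forall k, (2 <= k <= 2 * n)%nat -> ((k - 1) * prodA a (k - 1) <= a k)%nat) /\
    (forall k s, (2 <= k <= 2 * n)%nat -> inI a k s ->
        subset X (closure X d (U s)) (U (removelast s))) /\
    (forall k s, (1 <= k <= 2 * n)%nat -> inI a k s -> diam_le X d (U s) (b k)) /\
    (forall k s t, (1 <= k <= 2 * n)%nat -> inI a k s -> inI a k t -> s <> t ->
        dist_gt X d (U s) (U t) (2 * b k)) /\
    (forall k i j, (k < 2 * n)%nat -> Nat.odd k = true -> inI a k i -> inI a k j ->
        subset X (U i) (U (Phi Psi a k)) -> ~ subset X (U j) (U (Phi Psi a k)) ->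
        forall s t, (1 <= s <= a (S k))%nat -> (1 <= t <= a (S k))%nat -> s <> t ->
        exists r,
          diam_le X d (fun x => exists u, (1 <= u <= a (S k))%nat /\ U (j ++ [u]) x) r /\
          dist_gt X d (U (i ++ [s])) (U (i ++ [t])) r).
Proof.
  intros [->|[Hn [HA [HU [b [Hb [H1 [H1' [H2 [H3 [H4 H5]]]]]]]]]]].
  - exists (fun _ => 1). repeat split; intros; try lra; try lia.
  - exists b. split; [apply Hb; lia|]. split; [exact Hb|]. split; [exact HA|]. split; [exact HU|]. split; [intros; exact H1|]. repeat (split; [assumption|]). assumption.
Qed.

Section Main.
Variable X : Type.
Variable d : X -> X -> R.
Variable Hm : is_metric X d.
Variable Hperf : perfect X d.
Variable x0 : X.
Variable Psi : nat -> list nat.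
Variable n : nat.
Variable a : nat -> nat.
Variable U : list nat -> X -> Prop.
Variable b : nat -> R.
Hypothesis Ob2n : 0 < b (2 * n)%nat.
Hypothesis Obpos : forall k, (1 <= k <= 2 * n)%nat -> 0 < b k.
Hypothesis OA : forall k, (1 <= k <= 2 * n)%nat -> (1 <= a k)%nat.
Hypothesis OU : forall k s, (1 <= k <= 2 * n)%nat -> inI a k s -> open X d (U s) /\ exists x, U s x.
Hypothesis Oa1 : (1 <= n)%nat -> (2 <= a 1%nat)%nat.
Hypothesis Ogrow : forall k, (2 <= k <= 2 * n)%nat -> ((k - 1) * prodA a (k - 1) <= a k)%nat.
Hypothesis O2 : forall k s, (2 <= k <= 2 * n)%nat -> inI a k s ->
        subset X (closure X d (U s)) (U (removelast s)).
Hypothesis O3 : forall k s, (1 <= k <= 2 * n)%nat -> inI a k s -> diam_le X d (U s) (b k).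
Hypothesis O4 : forall k s t, (1 <= k <= 2 * n)%nat -> inI a k s -> inI a k t -> s <> t ->
        dist_gt X d (U s) (U t) (2 * b k).
Hypothesis O5 : forall k i j, (k < 2 * n)%nat -> Nat.odd k = true -> inI a k i -> inI a k j ->
        subset X (U i) (U (Phi Psi a k)) -> ~ subset X (U j) (U (Phi Psi a k)) ->
        forall s t, (1 <= s <= a (S k))%nat -> (1 <= t <= a (S k))%nat -> s <> t ->
        exists r,
          diam_le X d (fun x => exists u, (1 <= u <= a (S k))%nat /\ U (j ++ [u]) x) r /\
          dist_gt X d (U (i ++ [s])) (U (i ++ [t])) r.
Variable K0 : X -> Prop.
Variable eps : R.
Hypothesis Heps : 0 < eps.
Hypothesis HK0 : isK X d K0.
Definition P (i : list nat) (x : X) : Prop := n = 0%nat \/ U i x.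
Hypothesis HK0cov : forall x, K0 x -> exists i, inI a (2 * n) i /\ P i x.
Hypothesis HK0meet : forall i, inI a (2 * n) i -> exists x, K0 x /\ P i x.

Lemma P_open i x : inI a (2 * n) i -> P i x -> exists e, 0 < e /\ forall y, d x y < e -> P i y.
Proof.
  intros Hi Hx. destruct (Nat.eq_dec n 0) as [Hn|Hn].
  - exists 1. split; [lra|]. intros; left; auto.
  - destruct Hx as [Hx|Hx]; [lia|].
    destruct (OU (2 * n) i ltac:(lia) Hi) as [Ho _].
    destruct (Ho x Hx) as [e [He H]]. exists e; split; auto. intros y Hy; right; auto.
Qed.

Lemma net del : 0 < del -> exists L : list X, (forall p, In p L -> K0 p) /\
  forall x, K0 x -> exists j, (j < length L)%nat /\ d (nth j L x0) x < del.
Proof.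
  intros Hd. destruct HK0 as [_ Hc].
  destruct (Hc {p | K0 p} (fun p => ball X d (proj1_sig p) del)) as [l Hl].
  - intros p. apply ball_open; auto.
  - intros x Hx. exists (exist _ x Hx). unfold ball; simpl. rewrite dzero; auto.
  - exists (map (@proj1_sig _ _) l). split.
    + intros p Hp. apply in_map_iff in Hp. destruct Hp as [[y Hy] [<- _]]. auto.
    + intros x Hx. destruct (Hl x Hx) as [i [Hi Hix]].
      assert (Hin : In (proj1_sig i) (map (@proj1_sig _ _) l)) by (apply in_map; auto).
      destruct (In_nth _ _ x0 Hin) as [j [Hj Hj2]]. exists j. split; auto. rewrite Hj2. exact Hix.
Qed.

Lemma main : exists a' U', balanced X d Psi (S n) a' U' /\ consistent X n a U a' U' /\
  forall K, Upi X d (S n) a' U' K -> hball X d K0 eps K.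
Proof.
  set (del := eps / 8).
  assert (Hdel : 0 < del) by (unfold del; lra).
  destruct (net del Hdel) as [L [HL1 HL2]].
  set (m := length L).
  destruct (choice_fun _ _ (fun i q => inI a (2*n) i -> K0 q /\ P i q)) as [q Hq].
  { intros i. destruct (classic (inI a (2*n) i)) as [Hi|Hi].
    - destruct (HK0meet i Hi) as [x Hx]. exists x; auto.
    - exists x0; tauto. }
  set (A := (m + 2*n*prodA a (2*n) + 2)%nat).
  set (base := fun (i : list nat) (u : nat) =>
     if (u <=? m)%nat then (if excluded_middle_informative (K0 (nth (u-1) L x0) /\ P i (nth (u-1) L x0)) then nth (u-1) L x0 else q i) else q i).
  assert (Hbase : forall i u, inI a (2*n) i -> K0 (base i u) /\ P i (base i u)).
  { intros i u Hi. unfold base. destruct (u <=? m)%nat; [destruct (excluded_middle_informative _) as [E|E]|].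
    - exact E.
    - apply Hq; auto.
    - apply Hq; auto. }
  assert (Hbase2 : forall i j, (j < m)%nat -> P i (nth j L x0) -> base i (S j) = nth j L x0).
  { intros i j Hj Hp. unfold base. replace (S j <=? m)%nat with true by (symmetry; apply Nat.leb_le; lia).
    replace (S j - 1)%nat with j by lia.
    destruct (excluded_middle_informative _) as [E|E]; auto. exfalso. apply E.
    split; auto. apply HL1. apply nth_In. auto. }
  clearbody base.
  destruct (choice_fun _ _ (fun i (e : nat -> R) => inI a (2*n) i -> forall u, 0 < e u /\ forall y, d (base i u) y < e u -> P i y)) as [e He].
  { intros i. destruct (classic (inI a (2*n) i)) as [Hi|Hi]; [|exists (fun _ => 1); tauto].
    destruct (choice_fun _ _ (fun u r => 0 < r /\ forall y, d (base i u) y < r -> P i y)) as [f Hf].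
    { intros u. apply P_open; auto. apply Hbase; auto. }
    exists f; auto. }
  destruct (choice_fun _ _ (fun i (f : nat -> X) => inI a (2*n) i ->
     (forall u, (1 <= u <= A)%nat -> d (base i u) (f u) < Rmin del (e i u / 2)) /\
     (forall u u', (1 <= u <= A)%nat -> (1 <= u' <= A)%nat -> u <> u' -> f u <> f u'))) as [c Hc].
  { intros i. destruct (classic (inI a (2*n) i)) as [Hi|Hi]; [|exists (fun _ => x0); tauto].
    destruct (dfam X d Hm Hperf (base i) (fun u => Rmin del (e i u / 2)) A) as [f Hf].
    { intros u _. apply Rmin_pos; auto. destruct (He i Hi u); lra. }
    exists f; auto. }
  destruct (finite_min_I a (fun i t => (forall u u', (1<=u<=A)%nat -> (1<=u'<=A)%nat -> u<>u' -> t < d (c i u) (c i u')) /\ (forall u, (1<=u<=A)%nat -> forall y, d (c i u) y < t -> P i y))) with (k := (2*n)%nat) as [tau [Htau HT]].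
  { intros i t t' Ht' Hle [H1 H2]; split; intros.
    - specialize (H1 u u' H H0 H3); lra.
    - apply (H2 u H y); lra. }
  { intros i Hi. destruct (Hc i Hi) as [Hc1 Hc2].
    destruct (sep_range X d Hm (c i) A Hc2) as [s1 [Hs1 Hs1']].
    destruct (finite_min_range (fun u t => forall y, d (c i u) y < t -> P i y)) with (N := A) as [s2 [Hs2 Hs2']].
    + intros u t t' ? ? Hx y Hy. apply Hx; lra.
    + intros u Hu. exists (e i u / 2). destruct (He i Hi u) as [He1 He2]. split; [lra|].
      intros y Hy. apply He2. pose proof (dtri X d Hm (base i u) (c i u) y). specialize (Hc1 u Hu).
      pose proof (Rmin_r del (e i u/2)). lra.
    + exists (Rmin s1 s2). split; [apply Rmin_pos; auto|]. split.
      * intros. specialize (Hs1' u u' H H0 H1). pose proof (Rmin_l s1 s2). lra.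
      * intros u Hu y Hy. apply (Hs2' u Hu). pose proof (Rmin_r s1 s2). lra. }
  set (r1 := Rmin (tau/8) (Rmin del (b (2*n)%nat / 2))).
  assert (Hr1 : 0 < r1 /\ r1 <= tau/8 /\ r1 <= del /\ r1 <= b (2*n)%nat/2).
  { unfold r1. repeat split.
    - repeat apply Rmin_pos; lra.
    - apply Rmin_l.
    - eapply Rle_trans; [apply Rmin_r| apply Rmin_l].
    - eapply Rle_trans; [apply Rmin_r| apply Rmin_r]. }
  clearbody r1.
  set (N2 := (2*n)%nat).
  set (a1 := fun k => if (k <=? N2)%nat then a k else A).
  set (B := (S N2 * prodA a1 (S N2) + 1)%nat).
  set (a' := fun k => if (k <=? S N2)%nat then a1 k else B).
  assert (Ha'lo : forall k, (k <= N2)%nat -> a' k = a k).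
  { intros k Hk. unfold a', a1. replace (k <=? S N2)%nat with true by (symmetry; apply Nat.leb_le; lia).
    replace (k <=? N2)%nat with true by (symmetry; apply Nat.leb_le; lia). auto. }
  assert (Ha'mid : a' (S N2) = A).
  { unfold a', a1. rewrite Nat.leb_refl. replace (S N2 <=? N2)%nat with false by (symmetry; apply Nat.leb_gt; lia). auto. }
  assert (Ha'hi : a' (S (S N2)) = B).
  { unfold a'. replace (S (S N2) <=? S N2)%nat with false by (symmetry; apply Nat.leb_gt; lia). auto. }
  assert (HB : B = (S N2 * prodA a' (S N2) + 1)%nat).
  { unfold B. f_equal. f_equal. symmetry. apply prodA_ext. intros j Hj. unfold a'.
    replace (j <=? S N2)%nat with true by (symmetry; apply Nat.leb_le; lia). auto. }
  assert (HprodN2 : prodA a' N2 = prodA a N2).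
  { apply prodA_ext. intros; apply Ha'lo; lia. }
  clearbody a' B. clear a1.
  assert (HIlo : forall k s, (k <= N2)%nat -> inI a' k s <-> inI a k s).
  { intros k s Hk. split; apply inI_ext; intros j Hj; rewrite Ha'lo; auto; lia. }
  assert (HImid : forall s, inI a' (S N2) s -> inI a N2 (removelast s) /\ (1 <= last s 0 <= A)%nat /\
             s = removelast s ++ [last s 0%nat]).
  { intros s Hs. destruct (inI_decomp _ _ _ Hs) as [s0 [u [-> [H1 H2]]]].
    rewrite removelast_last, last_last. rewrite Ha'mid in H2. split; [apply HIlo; auto|]. auto. }
  assert (HImid' : forall i u, inI a N2 i -> (1 <= u <= A)%nat -> inI a' (S N2) (i ++ [u])).
  { intros i u Hi Hu. apply inI_snoc; [apply HIlo; auto| rewrite Ha'mid; auto]. }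
  assert (HIhi : forall t, inI a' (S (S N2)) t -> inI a' (S N2) (removelast t) /\ (1 <= last t 0 <= B)%nat /\
             t = removelast t ++ [last t 0%nat]).
  { intros s Hs. destruct (inI_decomp _ _ _ Hs) as [s0 [u [-> [H1 H2]]]].
    rewrite removelast_last, last_last. rewrite Ha'hi in H2. auto. }
  assert (HIhi' : forall s v, inI a' (S N2) s -> (1 <= v <= B)%nat -> inI a' (S (S N2)) (s ++ [v])).
  { intros s v Hs Hv. apply inI_snoc; [auto| rewrite Ha'hi; auto]. }
  set (cc := fun s => c (removelast s) (last s 0%nat)).
  assert (HccP : forall s, inI a' (S N2) s -> forall y, d (cc s) y < tau -> P (removelast s) y).
  { intros s Hs y Hy. destruct (HImid s Hs) as [H1 [H2 _]]. apply (proj2 (HT _ H1) (last s 0%nat) H2). auto. }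
  assert (Hccb : forall s, inI a' (S N2) s -> d (base (removelast s) (last s 0%nat)) (cc s) < del).
  { intros s Hs. destruct (HImid s Hs) as [H1 [H2 _]]. pose proof (proj1 (Hc _ H1) _ H2).
    pose proof (Rmin_l del (e (removelast s) (last s 0%nat) / 2)). unfold cc; lra. }
  assert (Hccsep : forall s s', inI a' (S N2) s -> inI a' (S N2) s' -> s <> s' ->
     removelast s = removelast s' -> tau < d (cc s) (cc s')).
  { intros s s' Hs Hs' Hne Hr. destruct (HImid s Hs) as [H1 [H2 H3]]. destruct (HImid s' Hs') as [H1' [H2' H3']].
    unfold cc. rewrite <- Hr. apply (proj1 (HT _ H1)); auto. intro E. apply Hne. rewrite H3, H3', Hr, E. auto. }
  clearbody cc.
  set (U1 := fun s => if (length s <=? N2)%nat then U s else ball X d (cc s) r1).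
  set (Phi0 := Phi Psi a' (S N2)).
  set (g := fun s => dec (subset X (U1 s) (U1 Phi0))).
  destruct (choice_fun _ _ (fun s (f : nat -> X) => inI a' (S N2) s ->
     (forall v, (1 <= v <= B)%nat -> d (cc s) (f v) < r1/2) /\
     (forall v v', (1 <= v <= B)%nat -> (1 <= v' <= B)%nat -> v <> v' -> f v <> f v'))) as [ph1 Hph1].
  { intros s. destruct (dfam X d Hm Hperf (fun _ => cc s) (fun _ => r1/2) B) as [f Hf].
    { intros; lra. } exists f; intros; exact Hf. }
  destruct (finite_min_I a' (fun s t => forall v v', (1 <= v <= B)%nat -> (1 <= v' <= B)%nat -> v <> v' -> t < d (ph1 s v) (ph1 s v'))) with (k := S N2) as [sig1 [Hsig1 HS1]].
  { intros s t t' ? ? Hx v v' ? ? ?. specialize (Hx v v' H1 H2 H3). lra. }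
  { intros s Hs. apply (sep_range X d Hm (ph1 s) B). apply Hph1; auto. }
  destruct (choice_fun _ _ (fun s (f : nat -> X) => inI a' (S N2) s ->
     (forall v, (1 <= v <= B)%nat -> d (cc s) (f v) < Rmin (r1/2) (sig1/16)) /\
     (forall v v', (1 <= v <= B)%nat -> (1 <= v' <= B)%nat -> v <> v' -> f v <> f v'))) as [ph2 Hph2].
  { intros s. destruct (dfam X d Hm Hperf (fun _ => cc s) (fun _ => Rmin (r1/2) (sig1/16)) B) as [f Hf].
    { intros; apply Rmin_pos; lra. } exists f; intros; exact Hf. }
  destruct (finite_min_I a' (fun s t => forall v v', (1 <= v <= B)%nat -> (1 <= v' <= B)%nat -> v <> v' -> t < d (ph2 s v) (ph2 s v'))) with (k := S N2) as [sig2 [Hsig2 HS2]].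
  { intros s t t' ? ? Hx v v' ? ? ?. specialize (Hx v v' H1 H2 H3). lra. }
  { intros s Hs. apply (sep_range X d Hm (ph2 s) B). apply Hph2; auto. }
  set (c2 := fun s v => if g s then ph1 s v else ph2 s v).
  set (r2 := Rmin (Rmin (sig1/16) (sig2/8)) (r1/4)).
  assert (Hr2 : 0 < r2 /\ r2 <= sig1/16 /\ r2 <= sig2/8 /\ r2 <= r1/4).
  { unfold r2. repeat split.
    - repeat apply Rmin_pos; lra.
    - eapply Rle_trans; [apply Rmin_l| apply Rmin_l].
    - eapply Rle_trans; [apply Rmin_l| apply Rmin_r].
    - apply Rmin_r. }
  clearbody r2.
  assert (Hc2a : forall s v, inI a' (S N2) s -> (1 <= v <= B)%nat -> d (cc s) (c2 s v) < r1/2).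
  { intros s v Hs Hv. unfold c2. destruct (g s).
    - apply (proj1 (Hph1 s Hs)); auto.
    - pose proof (proj1 (Hph2 s Hs) v Hv). pose proof (Rmin_l (r1/2) (sig1/16)). lra. }
  assert (Hc2sep : forall s v v', inI a' (S N2) s -> (1 <= v <= B)%nat -> (1 <= v' <= B)%nat -> v <> v' ->
      8 * r2 < d (c2 s v) (c2 s v')).
  { intros s v v' Hs Hv Hv' Hne. unfold c2. destruct (g s).
    - pose proof (HS1 s Hs v v' Hv Hv' Hne). lra.
    - pose proof (HS2 s Hs v v' Hv Hv' Hne). lra. }
  set (U' := fun s => if (length s <=? S N2)%nat then U1 s else ball X d (c2 (removelast s) (last s 0%nat)) r2).
  assert (HU'lo : forall s, (length s <= N2)%nat -> U' s = U s).
  { intros s Hs. unfold U', U1. replace (length s <=? S N2)%nat with true by (symmetry; apply Nat.leb_le; lia).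
    replace (length s <=? N2)%nat with true by (symmetry; apply Nat.leb_le; lia). auto. }
  assert (HU'mid : forall s, length s = S N2 -> U' s = ball X d (cc s) r1).
  { intros s Hs. unfold U', U1. rewrite Hs, Nat.leb_refl.
    replace (S N2 <=? N2)%nat with false by (symmetry; apply Nat.leb_gt; lia). auto. }
  assert (HU'hi : forall s, length s = S (S N2) -> U' s = ball X d (c2 (removelast s) (last s 0%nat)) r2).
  { intros s Hs. unfold U'. rewrite Hs.
    replace (S (S N2) <=? S N2)%nat with false by (symmetry; apply Nat.leb_gt; lia). auto. }
  assert (HU'1 : forall s, (length s <= S N2)%nat -> U' s = U1 s).
  { intros s Hs. unfold U'. replace (length s <=? S N2)%nat with true by (symmetry; apply Nat.leb_le; lia). auto. }
  assert (Hg : forall s, inI a' (S N2) s -> (g s = true <-> subset X (U' s) (U' Phi0))).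
  { intros s Hs. unfold g. rewrite dec_true. rewrite !HU'1; [tauto| |].
    - apply Phi_len; lia.
    - destruct Hs as [Hs _]; lia. }

  assert (Hc2g : forall s v, (g s = true -> c2 s v = ph1 s v) /\ (g s = false -> c2 s v = ph2 s v)).
  { intros s v. unfold c2. split; intros ->; auto. }
  clearbody U'. clearbody g. clearbody c2.
  assert (L4mid : forall s t, inI a' (S N2) s -> inI a' (S N2) t -> s <> t -> dist_gt X d (U' s) (U' t) (2 * (2 * r1))).
  { intros s t Hs Ht Hne. rewrite (HU'mid s (proj1 Hs)), (HU'mid t (proj1 Ht)).
    destruct (list_eq_dec Nat.eq_dec (removelast s) (removelast t)) as [Hr|Hr].
    - apply ball_sep; auto. pose proof (Hccsep s t Hs Ht Hne Hr). lra.
    - destruct (HImid s Hs) as [H1 _]. destruct (HImid t Ht) as [H1' _].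
      destruct (Nat.eq_dec n 0) as [Hn|Hn].
      { exfalso. apply Hr. unfold N2 in *. rewrite Hn in H1, H1'. simpl in H1, H1'.
        apply inI_0 in H1, H1'. congruence. }
      apply dist_gt_mono with (A' := U (removelast s)) (B' := U (removelast t)) (r := 2 * b (2*n)%nat).
      + intros y Hy. unfold ball in Hy. destruct (HccP s Hs y ltac:(lra)) as [?|?]; [lia|auto].
      + intros y Hy. unfold ball in Hy. destruct (HccP t Ht y ltac:(lra)) as [?|?]; [lia|auto].
      + apply O4; auto. lia.
      + lra. }
  assert (Hin : forall s0 v x, inI a' (S N2) s0 -> (1 <= v <= B)%nat -> d (c2 s0 v) x <= r2 -> d (cc s0) x < r1).
  { intros s0 v x Hs0 Hv Hx. pose proof (Hc2a s0 v Hs0 Hv). pose proof (dtri X d Hm (cc s0) (c2 s0 v) x). lra. }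
  set (b' := fun k => if (k <=? N2)%nat then b k else if (k =? S N2)%nat then 2*r1 else 2*r2).
  assert (Hb'lo : forall k, (k <= N2)%nat -> b' k = b k).
  { intros k Hk. unfold b'. replace (k <=? N2)%nat with true by (symmetry; apply Nat.leb_le; lia). auto. }
  assert (Hb'mid : b' (S N2) = 2*r1).
  { unfold b'. replace (S N2 <=? N2)%nat with false by (symmetry; apply Nat.leb_gt; lia). rewrite Nat.eqb_refl. auto. }
  assert (Hb'hi : b' (S (S N2)) = 2*r2).
  { unfold b'. replace (S (S N2) <=? N2)%nat with false by (symmetry; apply Nat.leb_gt; lia).
    replace (S (S N2) =? S N2)%nat with false by (symmetry; apply Nat.eqb_neq; lia). auto. }
  clearbody b'.
  assert (HlenI : forall k s, inI a' k s -> length s = k) by (intros k s [H _]; exact H).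
  exists a', U'. split; [|split].
  - right. replace (2 * S n)%nat with (S (S N2)) by (unfold N2; lia).
    split; [lia|].
    split.
    { intros k Hk. assert (Hk' : (k <= N2 \/ k = S N2 \/ k = S (S N2))%nat) by lia.
      destruct Hk' as [Hk'|[-> | ->]].
      - rewrite Ha'lo by auto. apply OA. unfold N2 in Hk'; lia.
      - rewrite Ha'mid. unfold A; lia.
      - rewrite Ha'hi, HB. lia. }
    split.
    { intros k s Hk Hs. pose proof (HlenI _ _ Hs) as Hl.
      assert (Hk' : (k <= N2 \/ k = S N2 \/ k = S (S N2))%nat) by lia.
      destruct Hk' as [Hk'|[-> | ->]].
      - rewrite HU'lo by lia. apply (OU k); [unfold N2 in *; lia| apply HIlo; auto].
      - rewrite HU'mid by auto. split; [apply ball_open; auto| exists (cc s); unfold ball; rewrite (dzero X d Hm); lra].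
      - rewrite HU'hi by auto. split; [apply ball_open; auto|].
        exists (c2 (removelast s) (last s 0%nat)); unfold ball; rewrite (dzero X d Hm); lra. }
    exists b'. split.
    { intros k Hk. assert (Hk' : (k <= N2 \/ k = S N2 \/ k = S (S N2))%nat) by lia.
      destruct Hk' as [Hk'|[-> | ->]].
      - rewrite Hb'lo by auto. apply Obpos. unfold N2 in Hk'; lia.
      - rewrite Hb'mid. lra.
      - rewrite Hb'hi. lra. }
    split.
    { destruct (Nat.eq_dec n 0) as [Hn|Hn].
      - assert (E : 1%nat = S N2) by (unfold N2; lia). rewrite E, Ha'mid. unfold A; lia.
      - rewrite Ha'lo by (unfold N2; lia). apply Oa1. lia. }
    split.
    { intros k Hk. assert (Hk' : (k <= N2 \/ k = S N2 \/ k = S (S N2))%nat) by lia.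
      destruct Hk' as [Hk'|[-> | ->]].
      - rewrite Ha'lo by auto. rewrite (prodA_ext a a') by (intros; apply Ha'lo; lia). apply Ogrow. unfold N2 in Hk'; lia.
      - replace (S N2 - 1)%nat with N2 by lia. rewrite HprodN2, Ha'mid. unfold A, N2. lia.
      - replace (S (S N2) - 1)%nat with (S N2) by lia. rewrite Ha'hi, HB. lia. }
    split.
    { intros k s Hk Hs. pose proof (HlenI _ _ Hs) as Hl.
      assert (Hk' : (k <= N2 \/ k = S N2 \/ k = S (S N2))%nat) by lia.
      destruct Hk' as [Hk'|[-> | ->]].
      - destruct k as [|k]; [lia|]. destruct (inI_decomp _ _ _ Hs) as [s0 [u [Es [Hs0 _]]]].
        rewrite HU'lo by lia. rewrite HU'lo.
        + apply (O2 (S k)); [unfold N2 in *; lia| apply HIlo; auto].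
        + rewrite Es, removelast_last. rewrite (HlenI _ _ Hs0). lia.
      - destruct (HImid s Hs) as [Hi _]. rewrite HU'mid by auto. rewrite HU'lo by (destruct Hi; lia).
        intros x Hx. apply closure_ball_le in Hx; auto.
        destruct (HccP s Hs x ltac:(lra)) as [Hn|Hx']; [unfold N2 in *; lia| exact Hx'].
      - destruct (HIhi s Hs) as [Hs0 [Hv _]]. rewrite HU'hi by auto. rewrite HU'mid by (apply HlenI; auto).
        intros x Hx. apply closure_ball_le in Hx; auto. unfold ball. eapply Hin; eauto. }
    split.
    { intros k s Hk Hs. pose proof (HlenI _ _ Hs) as Hl.
      assert (Hk' : (k <= N2 \/ k = S N2 \/ k = S (S N2))%nat) by lia.
      destruct Hk' as [Hk'|[-> | ->]].
      - rewrite HU'lo by lia. rewrite Hb'lo by auto. apply O3; [unfold N2 in *; lia| apply HIlo; auto].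
      - rewrite HU'mid by auto. rewrite Hb'mid. apply ball_diam; auto.
      - rewrite HU'hi by auto. rewrite Hb'hi. apply ball_diam; auto. }
    split.
    { intros k s t Hk Hs Ht Hne. pose proof (HlenI _ _ Hs) as Hl. pose proof (HlenI _ _ Ht) as Hl'.
      assert (Hk' : (k <= N2 \/ k = S N2 \/ k = S (S N2))%nat) by lia.
      destruct Hk' as [Hk'|[-> | ->]].
      - rewrite !HU'lo by lia. rewrite Hb'lo by auto. apply O4; auto; [unfold N2 in *; lia| apply HIlo; auto | apply HIlo; auto].
      - rewrite Hb'mid. apply L4mid; auto.
      - rewrite Hb'hi. rewrite (HU'hi s), (HU'hi t) by auto.
        destruct (HIhi s Hs) as [Hs0 [Hv Es]]. destruct (HIhi t Ht) as [Ht0 [Hw Et]].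
        destruct (list_eq_dec Nat.eq_dec (removelast s) (removelast t)) as [Hr|Hr].
        + rewrite <- Hr. apply ball_sep; auto.
          assert (last s 0%nat <> last t 0%nat) as Hvw by (intro E; apply Hne; rewrite Es, Et, Hr, E; auto).
          pose proof (Hc2sep (removelast s) _ _ Hs0 Hv Hw Hvw). lra.
        + apply dist_gt_mono with (A' := U' (removelast s)) (B' := U' (removelast t)) (r := 2 * (2 * r1)).
          * rewrite HU'mid by (apply HlenI; auto). intros x Hx. unfold ball in *. apply (Hin (removelast s) (last s 0%nat) x Hs0 Hv); lra.
          * rewrite HU'mid by (apply HlenI; auto). intros x Hx. unfold ball in *. apply (Hin (removelast t) (last t 0%nat) x Ht0 Hw); lra.
          * apply L4mid; auto.
          * lra. }
    { intros k i j Hk Hodd Hi Hj Hsi Hsj s t Hs Ht Hst.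
      assert (Hk' : (k < N2 \/ k = N2 \/ k = S N2)%nat) by lia.
      destruct Hk' as [Hk'|[-> | ->]].
      - destruct k as [|k']; [discriminate|]. set (k := S k') in *.
        assert (Hak : forall j0, (1 <= j0 <= k)%nat -> a' j0 = a j0) by (intros; apply Ha'lo; lia).
        rewrite (Phi_ext Psi a a' k Hak) in Hsi, Hsj.
        pose proof (HlenI _ _ Hi) as Hli. pose proof (HlenI _ _ Hj) as Hlj.
        assert (HlP : (length (Phi Psi a k) <= k)%nat) by (apply Phi_len; unfold k; lia).
        rewrite !HU'lo in Hsi, Hsj by lia.
        rewrite (Ha'lo (S k)) in Hs, Ht |- * by lia.
        destruct (O5 k i j ltac:(unfold N2 in *; lia) Hodd (proj1 (HIlo k i ltac:(lia)) Hi) (proj1 (HIlo k j ltac:(lia)) Hj) Hsi Hsj s t Hs Ht Hst) as [r [Hd Hdist]].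
        exists r. split.
        + intros x y [u [Hu Hx]] [w [Hw Hy]]. rewrite HU'lo in Hx, Hy by (rewrite length_app; simpl; lia).
          apply Hd; eauto.
        + rewrite !HU'lo by (rewrite length_app; simpl; lia). exact Hdist.
      - exfalso. unfold N2 in Hodd. rewrite Nat.odd_even in Hodd. discriminate.
      - assert (Hgi : g i = true) by (apply Hg; auto).
        assert (Hgj : g j = false) by (destruct (g j) eqn:E; auto; exfalso; apply Hsj, Hg; auto).
        rewrite Ha'hi in Hs, Ht |- *.
        pose proof (HlenI _ _ Hi) as Hli. pose proof (HlenI _ _ Hj) as Hlj.
        exists (sig1 / 4). split.
        + intros x y [u [Hu Hx]] [w [Hw Hy]].
          rewrite HU'hi in Hx, Hy by (rewrite length_app; simpl; lia).
          rewrite removelast_last, last_last in Hx, Hy. unfold ball in Hx, Hy.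
          rewrite (proj2 (Hc2g j u) Hgj) in Hx. rewrite (proj2 (Hc2g j w) Hgj) in Hy.
          pose proof (proj1 (Hph2 j Hj) u Hu). pose proof (proj1 (Hph2 j Hj) w Hw).
          pose proof (Rmin_r (r1/2) (sig1/16)).
          pose proof (dtri X d Hm x (cc j) y). pose proof (dtri X d Hm (cc j) (ph2 j u) x).
          pose proof (dtri X d Hm (cc j) (ph2 j w) y). rewrite (dsym X d Hm x (cc j)) in *. lra.
        + rewrite !HU'hi by (rewrite length_app; simpl; lia). rewrite !removelast_last, !last_last.
          rewrite (proj1 (Hc2g i s) Hgi), (proj1 (Hc2g i t) Hgi). apply ball_sep; auto.
          pose proof (HS1 i Hi s t Hs Ht Hst). lra. }
  - split.
    + intros k Hk. apply Ha'lo. unfold N2; lia.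
    + intros k s Hk Hs x. rewrite HU'lo; [tauto|]. destruct Hs as [Hs _]. unfold N2; lia.
  - intros K [HKk HKu]. destruct HKu as [Hf|[Hcov Hmeet]]; [lia|].
    replace (2 * S n)%nat with (S (S N2)) in Hcov, Hmeet by (unfold N2; lia).
    exists (eps / 2). split; [lra|]. split.
    + intros x Hx. destruct (HL2 x Hx) as [j [Hj Hdj]].
      assert (Hp : K0 (nth j L x0)) by (apply HL1, nth_In; auto).
      destruct (HK0cov _ Hp) as [i [Hi Hpi]].
      assert (Hs : inI a' (S N2) (i ++ [S j])) by (apply HImid'; auto; unfold A, m in *; lia).
      assert (Hv : (1 <= 1 <= B)%nat) by (rewrite HB; lia).
      assert (Ht : inI a' (S (S N2)) ((i ++ [S j]) ++ [1%nat])) by (apply HIhi'; auto).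
      destruct (Hmeet _ Ht) as [y [Hy Hyt]]. exists y. split; auto.
      rewrite HU'hi in Hyt by (apply HlenI; auto). rewrite removelast_last, last_last in Hyt. unfold ball in Hyt.
      pose proof (Hc2a _ _ Hs Hv). pose proof (Hccb _ Hs). rewrite removelast_last, last_last in H0.
      rewrite Hbase2 in H0 by (auto; unfold m in *; lia).
      pose proof (dtri X d Hm x (nth j L x0) y). pose proof (dtri X d Hm (nth j L x0) (cc (i ++ [S j])) y).
      pose proof (dtri X d Hm (cc (i ++ [S j])) (c2 (i ++ [S j]) 1%nat) y).
      rewrite (dsym X d Hm x (nth j L x0)) in *. unfold del in *. lra.
    + intros y Hy. destruct (Hcov y Hy) as [t [Ht Hyt]]. destruct (HIhi t Ht) as [Hs [Hv _]].
      destruct (HImid _ Hs) as [Hi [Hu _]].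
      exists (base (removelast (removelast t)) (last (removelast t) 0%nat)). split; [apply Hbase; auto|].
      rewrite HU'hi in Hyt by (apply HlenI; auto). unfold ball in Hyt.
      pose proof (Hc2a _ _ Hs Hv). pose proof (Hccb _ Hs).
      pose proof (dtri X d Hm (base (removelast (removelast t)) (last (removelast t) 0%nat)) (cc (removelast t)) y).
      pose proof (dtri X d Hm (cc (removelast t)) (c2 (removelast t) (last t 0%nat)) y).
      unfold del in *. lra.
Qed.

End Main.
Theorem lemma4p10 (X : Type) (d : X -> X -> R)
  (Hmetric : is_metric X d)
  (Hpolish : separable X d /\
     exists d' : X -> X -> R, is_metric X d' /\ complete X d' /\
       (forall A : X -> Prop, open X d A <-> open X d' A))
  (Hne : inhabited X) (Hperf : perfect X d)
  (Psi : nat -> list nat)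
  (HPsi_len : forall m, Nat.odd m = true -> (length (Psi m) <= m)%nat)
  (HPsi_onto : forall s : list nat, exists m, Nat.odd m = true /\ Psi m = s)
  (n : nat) (a : nat -> nat) (U : list nat -> X -> Prop)
  (Hpi : balanced X d Psi n a U)
  (V : (X -> Prop) -> Prop)
  (HVopen : Kopen X d V) (HVne : exists K, V K)
  (HVsub : forall K, V K -> Upi X d n a U K) :
  exists (a' : nat -> nat) (U' : list nat -> X -> Prop),
    balanced X d Psi (S n) a' U' /\ consistent X n a U a' U' /\
    (forall K, Upi X d (S n) a' U' K -> V K).
Proof.
  destruct Hne as [x0].
  destruct (balanced_old _ _ _ _ _ _ Hpi) as [b [Ob2n [Obpos [OA [OU [Oa1 [Ogrow [O2 [O3 [O4 O5]]]]]]]]]].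
  destruct HVne as [K0 HK0V].
  destruct (HVopen K0 HK0V) as [HK0 [eps [Heps HepsV]]].
  destruct (HVsub K0 HK0V) as [_ HK0u].
  assert (HK0cov : forall x, K0 x -> exists i, inI a (2 * n) i /\ P X n U i x).
  { intros x Hx. destruct HK0u as [Hn|[Hc _]].
    - exists []. split; [subst n; apply inI_0; auto| left; auto].
    - destruct (Hc x Hx) as [i [Hi Hix]]. exists i; split; auto. right; auto. }
  assert (HK0meet : forall i, inI a (2 * n) i -> exists x, K0 x /\ P X n U i x).
  { intros i Hi. destruct HK0u as [Hn|[_ Hm]].
    - destruct HK0 as [[x Hx] _]. exists x; split; auto. left; auto.
    - destruct (Hm i Hi) as [x [Hx Hix]]. exists x; split; auto. right; auto. }
  destruct (main X d Hmetric Hperf x0 Psi n a U b Ob2n Obpos OA OU Oa1 Ogrow O2 O3 O4 O5 K0 eps Heps HK0 HK0cov HK0meet)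
    as [a' [U' [H1 [H2 H3]]]].
  exists a', U'. split; [auto|split; [auto|]].
  intros K HK. apply HepsV; [apply HK| apply H3; auto].
Qed.
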